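(* A completely simple semigroup $S=(G,P,\Lambda,I)$ is an equational domain in the language $\mathcal{L}_S=\{\cdot,{}^{-1}\}\cup\{s\mid s\in S\}$ if and only if both of the following hold: (1) the sandwich matrix $P$ is non-singular; (2) the structural group $G$ is an equational domain in the group language $\mathcal{L}_G$.
   Context: Rees representation: a completely simple semigroup $S=(G,P,\Lambda,I)$ is given by a group $G$ (structural group), index sets $\Lambda,I$ (each containing an element $1$), and a matrix $P=(p_{i\lambda})_{i\in I,\lambda\in\Lambda}$ over $G$ (sandwich matrix) normalised so that $p_{1\lambda}=p_{i1}=1_G$; elements are triples $(\lambda,g,i)$ with product $(\lambda,g,i)(\mu,h,j)=(\lambda,gp_{i\mu}h,j)$ and inversion $(\lambda,g,i)^{-1}=(\lambda,p_{i\lambda}^{-1}g^{-1}p_{i\lambda}^{-1},i)$. $P$ is non-singular if it has no two equal rows and no two equal columns. The language $\mathcal{L}_S$ has a constant for each element of $S$; the group language $\mathcal{L}_G$ is $\{\cdot,{}^{-1},1\}$ plus a constant for each element of $G$. An equation is an equality of two terms; a system is a set of equations; an algebraic set is the solution set of a system; a structure is an equational domain (e.d.) if every finite union of algebraic sets is algebraic. *)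

(* Defs.v *)
From mathcomp Require Import all_boot.
Set Implicit Arguments. Unset Strict Implicit. Unset Printing Implicit Defensive.

Record AbsGroup := {
  gcar :> Type;
  gmul : gcar -> gcar -> gcar;
  ginv : gcar -> gcar;
  gone : gcar;
  gmulA : forall x y z, gmul x (gmul y z) = gmul (gmul x y) z;
  gmul1l : forall x, gmul gone x = x;
  gmul1r : forall x, gmul x gone = x;
  gmulVl : forall x, gmul (ginv x) x = gone;
  gmulVr : forall x, gmul x (ginv x) = gone
}.

Section Generic.
Variable A : Type.
Variable Tm : nat -> Type.
Variable ev : forall n, Tm n -> ('I_n -> A) -> A.

Definition solution_set n (Sys : Tm n * Tm n -> Prop) : ('I_n -> A) -> Prop :=
  fun x => forall e, Sys e -> ev e.1 x = ev e.2 x.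

Definition algebraic n (Y : ('I_n -> A) -> Prop) : Prop :=
  exists Sys : Tm n * Tm n -> Prop, forall x, Y x <-> solution_set Sys x.

Definition equational_domain : Prop :=
  forall (n m : nat) (Y : 'I_m.+1 -> ('I_n -> A) -> Prop),
    (forall k, algebraic (Y k)) ->
    algebraic (fun x => exists k, Y k x).
End Generic.

Inductive gterm (G : Type) (n : nat) : Type :=
  | GVar of 'I_n
  | GCst of G
  | GOne
  | GMul of gterm G n & gterm G n
  | GInv of gterm G n.

Fixpoint geval (G : AbsGroup) n (t : gterm G n) (x : 'I_n -> G) : G :=
  match t with
  | GVar i => x i
  | GCst c => c
  | GOne => gone G
  | GMul t1 t2 => gmul (geval t1 x) (geval t2 x)
  | GInv t1 => ginv (geval t1 x)
  end.

Definition group_ed (G : AbsGroup) : Prop :=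
  equational_domain (@geval G).

Inductive sterm (S : Type) (n : nat) : Type :=
  | SVar of 'I_n
  | SCst of S
  | SMul of sterm S n & sterm S n
  | SInv of sterm S n.

Fixpoint seval (S : Type) (mul : S -> S -> S) (inv : S -> S) n
    (t : sterm S n) (x : 'I_n -> S) : S :=
  match t with
  | SVar i => x i
  | SCst c => c
  | SMul t1 t2 => mul (seval mul inv t1 x) (seval mul inv t2 x)
  | SInv t1 => inv (seval mul inv t1 x)
  end.

Section Rees.
Variables (G : AbsGroup) (Lam I : Type) (P : I -> Lam -> G).

Definition rees_car : Type := (Lam * G * I)%type.

Definition rees_mul (a b : rees_car) : rees_car :=
  let: (l, g, i) := a in let: (m, h, j) := b in
  (l, gmul (gmul g (P i m)) h, j).

Definition rees_inv (a : rees_car) : rees_car :=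
  let: (l, g, i) := a in
  (l, gmul (gmul (ginv (P i l)) (ginv g)) (ginv (P i l)), i).

Definition rees_ed : Prop :=
  equational_domain (@seval rees_car rees_mul rees_inv).

Definition normalised (l1 : Lam) (i1 : I) : Prop :=
  (forall l, P i1 l = gone G) /\ (forall i, P i l1 = gone G).

Definition nonsingular : Prop :=
  (forall i j : I, (forall l, P i l = P j l) -> i = j) /\
  (forall l m : Lam, (forall i, P i l = P i m) -> l = m).
End Rees.

(* Main.v *)
Require Import Defs.
From mathcomp Require Import all_boot.
From Stdlib Require Import Classical IndefiniteDescription.

Section Proof.
Variables (G : AbsGroup) (Lam Ix : Type) (l1 : Lam) (i1 : Ix) (P : Ix -> Lam -> G).

Local Notation S := (rees_car G Lam Ix).
Local Notation mul := (rees_mul P).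
Local Notation inv := (rees_inv P).
Local Notation sev := (seval mul inv).
Local Notation SEV := (@seval S mul inv).

Lemma ginv1 : ginv (gone G) = gone G.
Proof. by rewrite -[ginv _](@gmul1l G) gmulVr. Qed.

Lemma gcancr (a b g : G) : gmul a g = gmul b g -> a = b.
Proof. move=> h. by rewrite -(@gmul1r _ a) -(@gmulVr _ g) gmulA h -gmulA gmulVr gmul1r. Qed.

Lemma gcancl (a b g : G) : gmul g a = gmul g b -> a = b.
Proof. move=> h. by rewrite -(@gmul1l _ a) -(@gmulVl _ g) -gmulA h gmulA gmulVl gmul1l. Qed.

Lemma triple_eq (u w : S) : u.1.1 = w.1.1 -> u.1.2 = w.1.2 -> u.2 = w.2 -> u = w.
Proof. by case: u => [[? ?] ?]; case: w => [[? ?] ?] /= -> -> ->. Qed.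

Lemma mul_l (a b : S) : (mul a b).1.1 = a.1.1.
Proof. by case: a => [[? ?] ?]; case: b => [[? ?] ?]. Qed.
Lemma inv_l (a : S) : (inv a).1.1 = a.1.1.
Proof. by case: a => [[? ?] ?]. Qed.
Lemma mul_r (a b : S) : (mul a b).2 = b.2.
Proof. by case: a => [[? ?] ?]; case: b => [[? ?] ?]. Qed.
Lemma inv_r (a : S) : (inv a).2 = a.2.
Proof. by case: a => [[? ?] ?]. Qed.

Lemma point_alg n (p : 'I_n -> S) : algebraic SEV (fun x => forall v, x v = p v).
Proof.
exists (fun e => exists v, e = (SVar S v, SCst n (p v))) => x; split.
- by move=> h e [v ->] /=.
- by move=> h v; apply: (h _ (ex_intro _ v erefl)).
Qed.

Definition csim (a b : S) :=
  [/\ a.1.2 = b.1.2, a.2 = b.2 & forall j, P j a.1.1 = P j b.1.1].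

Lemma csim_eval n (t : sterm S n) x y :
  (forall v, csim (x v) (y v)) -> csim (sev t x) (sev t y).
Proof.
move=> h; elim: t => [v|c|a iha b ihb|a iha] /=.
- exact: h.
- by split.
- move: iha ihb.
  case: (sev a x) => [[la ga] ia]; case: (sev a y) => [[la' ga'] ia'].
  case: (sev b x) => [[lb gb] ib]; case: (sev b y) => [[lb' gb'] ib'].
  move=> [e1 e2 e3] [f1 f2 f3]; simpl in *; subst.
  by split => //=; rewrite f3.
- move: iha.
  case: (sev a x) => [[la ga] ia]; case: (sev a y) => [[la' ga'] ia'].
  move=> [e1 e2 e3]; simpl in *; subst.
  by split => //=; rewrite e3.
Qed.

Fixpoint lhd {n} (t : sterm S n) : 'I_n + S :=
  match t with SVar v => inl v | SCst c => inr c | SMul a _ => lhd a | SInv a => lhd a end.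

Lemma lhd_eval n (t : sterm S n) x :
  (sev t x).1.1 = match lhd t with inl v => (x v).1.1 | inr c => c.1.1 end.
Proof. by elim: t => [v|c|a iha b ihb|a iha] //=; rewrite ?mul_l ?inv_l. Qed.

Lemma col_ns : rees_ed P -> forall l m : Lam, (forall i, P i l = P i m) -> l = m.
Proof.
move=> hed l m hc; apply: NNPP => hlm.
pose a : S := (l, gone G, i1). pose b : S := (m, gone G, i1).
pose pab : 'I_2 -> S := fun v => if v == ord0 then a else b.
pose pba : 'I_2 -> S := fun v => if v == ord0 then b else a.
pose pk (k : 'I_2) := if k == ord0 then pab else pba.
pose r : 'I_2 -> S := fun _ => a.
have [Sys hSys] := hed 2 1 (fun k x => forall v, x v = pk k v) (fun k => point_alg _ (pk k)).
have Sp : solution_set SEV Sys pab by apply/hSys; exists ord0.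
have Sq : solution_set SEV Sys pba by apply/hSys; exists ord_max.
have Sr : solution_set SEV Sys r.
  move=> e he; have h1 := Sp e he; have h2 := Sq e he.
  have hs : forall v, csim (r v) (pab v).
    by move=> v; rewrite /r /pab; case: (v == ord0); split.
  have [c1 c2 c3] := @csim_eval _ e.1 _ _ hs.
  have [d1 d2 d3] := @csim_eval _ e.2 _ _ hs.
  apply: triple_eq; last by rewrite c2 d2 h1.
  + have k1 : (sev e.1 pab).1.1 = (sev e.2 pab).1.1 by rewrite h1.
    have k2 : (sev e.1 pba).1.1 = (sev e.2 pba).1.1 by rewrite h2.
    rewrite !lhd_eval in k1 k2 *.
    case: (lhd e.1) k1 k2 => [v|c]; case: (lhd e.2) => [w|d] /= k1 k2;
      [done| | |exact: k1];
      exfalso; apply: hlm; move: k1 k2; rewrite /pab /pba;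
      case: (_ == ord0) => /= k1 k2; congruence.
  + by rewrite c1 d1 h1.
have [k hk] := (proj2 (hSys r)) Sr.
have h0 := hk ord0; have h1 := hk ord_max.
move: h0 h1; rewrite /pk /r /pab /pba; case: (k == ord0) => /= h0 h1;
  apply: hlm; by [move: h1 => [] | move: h0 => []].
Qed.

Definition rsim (a b : S) :=
  [/\ a.1.1 = b.1.1, a.1.2 = b.1.2 & forall l, P a.2 l = P b.2 l].

Lemma rsim_eval n (t : sterm S n) x y :
  (forall v, rsim (x v) (y v)) -> rsim (sev t x) (sev t y).
Proof.
move=> h; elim: t => [v|c|a iha b ihb|a iha] /=.
- exact: h.
- by split.
- move: iha ihb.
  case: (sev a x) => [[la ga] ia]; case: (sev a y) => [[la' ga'] ia'].
  case: (sev b x) => [[lb gb] ib]; case: (sev b y) => [[lb' gb'] ib'].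
  move=> [e1 e2 e3] [f1 f2 f3]; simpl in *; subst.
  by split => //=; rewrite e3.
- move: iha.
  case: (sev a x) => [[la ga] ia]; case: (sev a y) => [[la' ga'] ia'].
  move=> [e1 e2 e3]; simpl in *; subst.
  by split => //=; rewrite e3.
Qed.

Fixpoint rhd {n} (t : sterm S n) : 'I_n + S :=
  match t with SVar v => inl v | SCst c => inr c | SMul _ b => rhd b | SInv a => rhd a end.

Lemma rhd_eval n (t : sterm S n) x :
  (sev t x).2 = match rhd t with inl v => (x v).2 | inr c => c.2 end.
Proof. by elim: t => [v|c|a iha b ihb|a iha] //=; rewrite ?mul_r ?inv_r. Qed.

Lemma row_ns : rees_ed P -> forall i j : Ix, (forall l, P i l = P j l) -> i = j.
Proof.
move=> hed l m hc; apply: NNPP => hlm.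
pose a : S := (l1, gone G, l). pose b : S := (l1, gone G, m).
pose pab : 'I_2 -> S := fun v => if v == ord0 then a else b.
pose pba : 'I_2 -> S := fun v => if v == ord0 then b else a.
pose pk (k : 'I_2) := if k == ord0 then pab else pba.
pose r : 'I_2 -> S := fun _ => a.
have [Sys hSys] := hed 2 1 (fun k x => forall v, x v = pk k v) (fun k => point_alg _ (pk k)).
have Sp : solution_set SEV Sys pab by apply/hSys; exists ord0.
have Sq : solution_set SEV Sys pba by apply/hSys; exists ord_max.
have Sr : solution_set SEV Sys r.
  move=> e he; have h1 := Sp e he; have h2 := Sq e he.
  have hs : forall v, rsim (r v) (pab v).
    by move=> v; rewrite /r /pab; case: (v == ord0); split.
  have [c1 c2 c3] := @rsim_eval _ e.1 _ _ hs.
  have [d1 d2 d3] := @rsim_eval _ e.2 _ _ hs.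
  apply: triple_eq.
  + by rewrite c1 d1 h1.
  + by rewrite c2 d2 h1.
  + have k1 : (sev e.1 pab).2 = (sev e.2 pab).2 by rewrite h1.
    have k2 : (sev e.1 pba).2 = (sev e.2 pba).2 by rewrite h2.
    rewrite !rhd_eval in k1 k2 *.
    case: (rhd e.1) k1 k2 => [v|c]; case: (rhd e.2) => [w|d] /= k1 k2;
      [done| | |exact: k1];
      exfalso; apply: hlm; move: k1 k2; rewrite /pab /pba;
      case: (_ == ord0) => /= k1 k2; congruence.
have [k hk] := (proj2 (hSys r)) Sr.
have h0 := hk ord0; have h1 := hk ord_max.
move: h0 h1; rewrite /pk /r /pab /pba; case: (k == ord0) => /= h0 h1;
  apply: hlm; by [move: h1 => [] | move: h0 => []].
Qed.

Hypothesis hP : normalised P l1 i1.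

Fixpoint tr {n N} (f : 'I_N -> sterm S n) (t : gterm G N) : sterm S n :=
  match t with
  | GVar v => f v
  | GCst c => SCst n (l1, c, i1)
  | GOne => SCst n (l1, gone G, i1)
  | GMul a b => SMul (tr f a) (tr f b)
  | GInv a => SInv (tr f a)
  end.

Lemma tr_eval {n N} {f : 'I_N -> sterm S n} {x : 'I_n -> S} {y : 'I_N -> G} :
  (forall v, sev (f v) x = (l1, y v, i1)) ->
  forall t, sev (tr f t) x = (l1, geval t y, i1).
Proof.
move=> hf; elim=> [v|c||a iha b ihb|a iha] //=.
- by rewrite iha ihb /= (proj2 hP) gmul1r.
- by rewrite iha /= (proj2 hP) ginv1 gmul1l gmul1r.
Qed.

Definition E0 : S := (l1, gone G, i1).

Lemma sandwich (x : S) : mul (mul E0 x) E0 = (l1, x.1.2, i1).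
Proof.
case: x => [[l g] i] /=.
by rewrite (proj1 hP) (proj2 hP) !gmul1l !gmul1r.
Qed.

Definition embp {n} (y : 'I_n -> G) : 'I_n -> S := fun v => (l1, y v, i1).

Fixpoint lf {n} (t : sterm S n) : Lam :=
  match t with SVar _ => l1 | SCst c => c.1.1 | SMul a _ => lf a | SInv a => lf a end.
Fixpoint rt {n} (t : sterm S n) : Ix :=
  match t with SVar _ => i1 | SCst c => c.2 | SMul _ b => rt b | SInv a => rt a end.
Fixpoint bt {n} (t : sterm S n) : gterm G n :=
  match t with
  | SVar v => GVar G v
  | SCst c => GCst n c.1.2
  | SMul a b => GMul (GMul (bt a) (GCst n (P (rt a) (lf b)))) (bt b)
  | SInv a => GMul (GMul (GInv (GCst n (P (rt a) (lf a)))) (GInv (bt a)))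
                   (GInv (GCst n (P (rt a) (lf a))))
  end.

Lemma bt_eval n (t : sterm S n) (y : 'I_n -> G) :
  sev t (embp y) = (lf t, geval (bt t) y, rt t).
Proof.
elim: t => [v|c|a iha b ihb|a iha] /=.
- done.
- by case: c => [[? ?] ?].
- by rewrite iha ihb.
- by rewrite iha.
Qed.

Lemma ged_of : rees_ed P -> group_ed G.
Proof.
move=> hed n m Y hY.
pose Y' k (x : 'I_n -> S) :=
  (forall v, x v = (l1, (x v).1.2, i1)) /\ Y k (fun v => (x v).1.2).
have hY' : forall k, algebraic SEV (Y' k).
  move=> k; case: (hY k) => Sk hSk.
  exists (fun e => (exists s, Sk s /\ e = (tr (fun v => SVar S v) s.1, tr (fun v => SVar S v) s.2))
          \/ (exists v, e = (SVar S v, SMul (SMul (SCst n E0) (SVar S v)) (SCst n E0)))).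
  move=> x; split.
  - case=> hx hy e [[s [hs ->]]|[v ->]] /=.
    + have hf : forall v, sev (SVar S v) x = (l1, (x v).1.2, i1) by move=> v; exact: hx.
      rewrite !(tr_eval hf).
      by rewrite ((proj1 (hSk _)) hy s hs).
    + by rewrite sandwich; exact: hx.
  - move=> hs.
    have hx : forall v, x v = (l1, (x v).1.2, i1).
      by move=> v; have := hs _ (or_intror (ex_intro _ v erefl)); rewrite /= sandwich.
    split=> //.
    have hf : forall v, sev (SVar S v) x = (l1, (x v).1.2, i1) by move=> v; exact: hx.
    apply/(proj2 (hSk _)) => s hs'.
    have := hs _ (or_introl (ex_intro _ s (conj hs' erefl))).
    rewrite /= !(tr_eval hf).
    by move/(f_equal (fun z : S => z.1.2)).
case: (hed n m Y' hY') => Sys hSys.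
case: (classic (exists e, Sys e /\ (lf e.1 <> lf e.2 \/ rt e.1 <> rt e.2))).
- move=> [e [he hmis]].
  case: (hY ord0) => S0 hS0.
  exists S0 => y; split.
  + case=> k hk; exfalso.
    have : solution_set SEV Sys (embp y).
      by apply/(proj1 (hSys _)); exists k; split.
    move/(_ e he); rewrite !bt_eval => h.
    have h1 := f_equal (fun z : S => z.1.1) h.
    have h2 := f_equal (fun z : S => z.2) h.
    by case: hmis.
  + by move=> hs; exists ord0; apply/(proj2 (hS0 y)).
- move=> hno.
  exists (fun e' => exists e, Sys e /\ e' = (bt e.1, bt e.2)) => y; split.
  + case=> k hk e' [e [he ->]] /=.
    have := proj1 (hSys (embp y)) (ex_intro _ k (conj (fun v => erefl) hk)) e he.
    rewrite !bt_eval.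
    by move/(f_equal (fun z : S => z.1.2)).
  + move=> hs.
    have : solution_set SEV Sys (embp y).
      move=> e he; rewrite !bt_eval.
      have h := hs _ (ex_intro _ e (conj he erefl)); simpl in h.
      have [hl hr] : lf e.1 = lf e.2 /\ rt e.1 = rt e.2.
        split; apply: NNPP => c; apply: hno; exists e.
          by split => //; left.
        by split => //; right.
      by rewrite hl hr h.
    move/(proj2 (hSys _)) => [k [_ hk]].
    by exists k.
Qed.

Definition cj (j : Ix) : S := (l1, gone G, j).
Definition dm (m : Lam) : S := (m, gone G, i1).
Definition phiT {n} (jm : Ix * Lam) (t : sterm S n) : sterm S n :=
  SMul (SMul (SCst n (cj jm.1)) t) (SCst n (dm jm.2)).
Definition phiv (jm : Ix * Lam) (a : S) : G := (mul (mul (cj jm.1) a) (dm jm.2)).1.2.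

Lemma phiT_eval n jm (t : sterm S n) x : sev (phiT jm t) x = (l1, phiv jm (sev t x), i1).
Proof. rewrite /phiT /phiv /=. by case: (sev t x) => [[l g] i]. Qed.

Lemma phiv_inj : nonsingular P -> forall a b, (forall jm, phiv jm a = phiv jm b) -> a = b.
Proof.
move=> [hr hc] [[la ga] ia] [[lb gb] ib] h.
have e' : forall j m, gmul (gmul (P j la) ga) (P ia m) = gmul (gmul (P j lb) gb) (P ib m).
  by move=> j m; have := h (j, m); rewrite /phiv /= !gmul1l !gmul1r.
have hg : ga = gb.
  by have := e' i1 l1; rewrite !(proj1 hP) !(proj2 hP) !gmul1l !gmul1r.
subst gb.
have hl : la = lb.
  apply: hc => j. have := e' j l1. rewrite !(proj2 hP) !gmul1r. by move/gcancr.
have hi : ia = ib.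
  apply: hr => m. have := e' i1 m. rewrite !(proj1 hP) !gmul1l. by move/gcancl.
by rewrite hl hi.
Qed.

Lemma split_l m (k : 'I_m.+1) : split (lshift m.+1 k) = inl k.
Proof. exact: (unsplitK (inl k)). Qed.
Lemma split_r m (k : 'I_m.+1) : split (rshift m.+1 k) = inr k.
Proof. exact: (unsplitK (inr k)). Qed.

Lemma ed_of : nonsingular P -> group_ed G -> rees_ed P.
Proof.
move=> hns hg n m Y hY.
pose N := m.+1 + m.+1.
pose Yg k (y : 'I_N -> G) := y (lshift m.+1 k) = y (rshift m.+1 k).
have hYg : forall k, algebraic (@geval G) (Yg k).
  move=> k; exists (fun e => e = (GVar G (lshift m.+1 k), GVar G (rshift m.+1 k))) => y; split.
  - by move=> h e ->.
  - by move=> h; exact: (h _ erefl).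
case: (hg N m Yg hYg) => Sg hSg.
have [Sys hSys] := functional_choice
  (fun k Sk => forall x, Y k x <-> solution_set SEV Sk x) hY.
pose F (c : 'I_m.+1 -> sterm S n * sterm S n) (jm : 'I_m.+1 -> Ix * Lam) : 'I_N -> sterm S n :=
  fun v => match split v with inl k => phiT (jm k) (c k).1 | inr k => phiT (jm k) (c k).2 end.
pose Yv (c : 'I_m.+1 -> sterm S n * sterm S n) (jm : 'I_m.+1 -> Ix * Lam) x : 'I_N -> G :=
  fun v => match split v with
           | inl k => phiv (jm k) (sev (c k).1 x)
           | inr k => phiv (jm k) (sev (c k).2 x) end.
have hF : forall c jm x v, sev (F c jm v) x = (l1, Yv c jm x v, i1).
  by move=> c jm x v; rewrite /F /Yv; case: (split v) => k; exact: phiT_eval.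
exists (fun e => exists c jm s, (forall k, Sys k (c k)) /\ Sg s /\
          e = (tr (F c jm) s.1, tr (F c jm) s.2)).
move=> x; split.
- case=> k0 hk0 e [c [jm [s [hc [hs ->]]]]] /=.
  rewrite !(tr_eval (hF c jm x)).
  have hy : solution_set (@geval G) Sg (Yv c jm x).
    apply/(proj1 (hSg _)); exists k0.
    rewrite /Yg /Yv split_l split_r.
    by rewrite ((proj1 (hSys k0 x)) hk0 _ (hc k0)).
  by rewrite (hy s hs).
- move=> hx; apply: NNPP => hn.
  have h1 : forall k, exists e, Sys k e /\ sev e.1 x <> sev e.2 x.
    move=> k; apply: NNPP => h; apply: hn; exists k.
    apply/(proj2 (hSys k x)) => e he.
    apply: NNPP => hne; apply: h; by exists e.
  case: (functional_choice _ h1) => c hc.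
  have h2 : forall k, exists jm, phiv jm (sev (c k).1 x) <> phiv jm (sev (c k).2 x).
    move=> k; apply: NNPP => h; apply: (proj2 (hc k)).
    apply: phiv_inj hns _ _ _ => jm.
    apply: NNPP => hne; apply: h; by exists jm.
  case: (functional_choice _ h2) => jm hjm.
  have : exists k, Yg k (Yv c jm x).
    apply/(proj2 (hSg _)) => s hs.
    have := hx _ (ex_intro _ c (ex_intro _ jm (ex_intro _ s
              (conj (fun k => proj1 (hc k)) (conj hs erefl))))).
    rewrite /= !(tr_eval (hF c jm x)).
    by move/(f_equal (fun z : S => z.1.2)).
  case=> k; rewrite /Yg /Yv split_l split_r.
  exact: hjm.
Qed.

End Proof.

Theorem mainTheorem7 (G : AbsGroup) (Lam Ix : Type) (l1 : Lam) (i1 : Ix)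
    (P : Ix -> Lam -> G) (hP : normalised P l1 i1) :
  rees_ed P <-> (nonsingular P /\ group_ed G).
Proof.
split.
- move=> h; split; [split|].
  + exact: (@row_ns G Lam Ix l1 P h).
  + exact: (@col_ns G Lam Ix i1 P h).
  + exact: (@ged_of G Lam Ix l1 i1 P hP h).
- by case=> h1 h2; exact: (@ed_of G Lam Ix l1 i1 P hP h1 h2).
Qed.
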